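(* Let $V$ be of class $\mathcal{C}^1$ and let $z$ be a saddle of $V$. Then $\nabla V(z)=0$.
   Context: $V:\mathbb{R}^d\to\mathbb{R}$ is a continuous potential, bounded below, with exponentially tight level sets. Communication height: $\overline V(x,y)=\inf_{\gamma}\sup_{t\in[0,1]}V(\gamma(t))$, the infimum over continuous paths $\gamma:[0,1]\to\mathbb{R}^d$ from $x$ to $y$. Closed valley $\mathcal{C}(x)=\{y:\overline V(y,x)=V(x)\}$, open valley $\mathcal{O}(x)=\{y\in\mathcal{C}(x):V(y)<V(x)\}$; $\mathcal{B}_\eta(x)$ is the open ball of radius $\eta$ about $x$. A point $z$ is a saddle if there is $\eta>0$ such that (i) $\mathcal{O}(z)\cap\mathcal{B}_\eta(z)$ is non-empty and not path-connected, and (ii) $(\mathcal{O}(z)\cup\{z\})\cap\mathcal{B}_\eta(z)$ is path-connected. *)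

(* Defs.v *)
From HB Require Import structures.
From mathcomp Require Import all_boot all_order all_algebra.
From mathcomp Require Import all_classical all_reals all_analysis.
Set Implicit Arguments. Unset Strict Implicit. Unset Printing Implicit Defensive.
Import Order.TTheory GRing.Theory Num.Theory.
Import numFieldNormedType.Exports.
Local Open Scope classical_set_scope.
Local Open Scope ring_scope.

Section Defs.
Variables (R : realType) (d : nat).
Notation E := 'rV[R]_d.

Definition basis_vec (i : 'I_d) : E := delta_mx 0 i.

Definition grad (V : E -> R) (x : E) : E :=
  \row_i ('D_(basis_vec i) V x).

Definition C1 (V : E -> R) : Prop :=
  (forall x, differentiable V x) /\
  (forall i : 'I_d, continuous (fun x => 'D_(basis_vec i) V x)).

Definition cpath (x y : E) (g : R -> E) : Prop :=
  {within `[0, 1], continuous g} /\ g 0 = x /\ g 1 = y.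

Definition comm_height (V : E -> R) (x y : E) : \bar R :=
  ereal_inf [set ereal_sup [set (V (g t))%:E | t in `[0, 1]] | g in cpath x y].

Definition closed_valley (V : E -> R) (x : E) : set E :=
  [set y | comm_height V y x = (V x)%:E].

Definition open_valley (V : E -> R) (x : E) : set E :=
  [set y | closed_valley V x y /\ V y < V x].

Definition eball (z : E) (eta : R) : set E :=
  [set y | \sum_(i < d) ((y - z) 0 i) ^+ 2 < eta ^+ 2].

Definition path_connected (A : set E) : Prop :=
  forall x y, A x -> A y ->
    exists g : R -> E, cpath x y g /\ (forall t, 0 <= t <= 1 -> A (g t)).

Definition is_saddle (V : E -> R) (z : E) : Prop :=
  exists eta : R, 0 < eta /\
    (open_valley V z `&` eball z eta !=set0) /\
    ~ path_connected (open_valley V z `&` eball z eta) /\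
    path_connected ((open_valley V z `|` [set z]) `&` eball z eta).

End Defs.

(* Main.v *)
Require Import Defs.
From HB Require Import structures.
From mathcomp Require Import all_boot all_order all_algebra.
From mathcomp Require Import all_classical all_reals all_analysis.
From mathcomp Require Import ring lra.
Import Order.TTheory GRing.Theory Num.Theory.
Import numFieldNormedType.Exports.
Local Open Scope classical_set_scope.
Local Open Scope ring_scope.

Set Implicit Arguments. Unset Strict Implicit.
Section W.
Variables (R : realType) (d : nat).
Notation E := 'rV[R]_d.
Definition dot (a b : E) : R := \sum_(i < d) a 0 i * b 0 i.

Definition Conn (A : set E) (p q : E) := exists g : R -> E,
  continuous g /\ g 0 = p /\ g 1 = q /\ forall t, 0 <= t <= 1 -> A (g t).

Definition clamp (t : R) : R := Num.min (Num.max t 0) 1.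

Lemma clamp_cont : continuous clamp.
Proof.
move=> t; apply: (@continuous_min R R (fun t => Num.max t 0) (fun=> 1)).
  apply: (@continuous_max R R id (fun=> 0)); [exact: cvg_id|exact: cvg_cst].
exact: cvg_cst.
Qed.

Lemma clamp_in t : 0 <= clamp t <= 1.
Proof.
rewrite /clamp; apply/andP; split.
  by rewrite le_min ler01 le_max lexx orbT.
by rewrite ge_min lexx orbT.
Qed.

Lemma clamp_id t : 0 <= t <= 1 -> clamp t = t.
Proof. by move=> /andP[t0 t1]; rewrite /clamp (max_l t0) (min_l t1). Qed.

Lemma clamp_comp_cont (g : R -> E) : {within `[0, 1], continuous g} ->
  continuous (g \o clamp).
Proof.
move=> /subspace_continuousP gc t.
have A : `[0, 1]%classic (clamp t) by rewrite /= in_itv /= clamp_in.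
apply: cvg_trans (gc _ A).
move=> P hP.
have hP' : nbhs (clamp t) (fun y => `[0, 1]%classic y -> P (g y)) := hP.
have := @clamp_cont t _ hP'.
move=> H; rewrite nbhs_filterE /=.
move: H; rewrite nbhs_filterE /=; apply: filterS => s /= Hs; apply: Hs.
by rewrite /= in_itv /= clamp_in.
Qed.

Lemma Conn_mono (A B : set E) p q : A `<=` B -> Conn A p q -> Conn B p q.
Proof. by move=> AB [g [gc [g0 [g1 gA]]]]; exists g; do 3 split => //; move=> t /gA/AB. Qed.

Lemma Conn_sym (A : set E) p q : Conn A p q -> Conn A q p.
Proof.
move=> [g [gc [g0 [g1 gA]]]]; exists (fun t => g (1 - t)); split.
  move=> t; apply: continuous_comp; last exact: gc.
  by apply: cvgB; [exact: cvg_cst|exact: cvg_id].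
rewrite subr0 subrr; do 2 split => //.
move=> t /andP[t0 t1]; apply: gA.
by rewrite subr_ge0 t1 /= lerBlDr lerDl.
Qed.

Lemma Conn_trans (A : set E) p q r : Conn A p q -> Conn A q r -> Conn A p r.
Proof.
move=> [g [gc [g0 [g1 gA]]]] [h [hc [h0 [h1 hA]]]].
exists (fun t => g (Num.min (2 * t) 1) + h (Num.max (2 * t - 1) 0) - g 1).
split.
  move=> t; apply: cvgB; last exact: cvg_cst.
  apply: cvgD.
    apply: continuous_comp; last exact: gc.
    apply: (@continuous_min R R (fun t => 2 * t) (fun=> 1)); last exact: cvg_cst.
    by apply: cvgM; [exact: cvg_cst|exact: cvg_id].
  apply: continuous_comp; last exact: hc.
  apply: (@continuous_max R R (fun t => 2 * t - 1) (fun=> 0)); last exact: cvg_cst.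
  apply: cvgB; last exact: cvg_cst.
  by apply: cvgM; [exact: cvg_cst|exact: cvg_id].
split.
  rewrite mulr0 (min_l ler01) (max_r (_ : 0 - 1 <= 0)) ?sub0r ?lerN10 //.
  by rewrite g0 h0 g1 addrK.
split.
  rewrite mulr1 (min_r (_ : 1 <= 2)) ?ler1n // (max_l (_ : 0 <= 2 - 1)).
    by rewrite addrC addKr (_ : (2:R) - 1 = 1) ?h1 //; lra.
  by rewrite subr_ge0 ler1n.
move=> t /andP[t0 t1].
have [ht|ht] := lerP (2 * t) 1.
  have -> : Num.max (2 * t - 1) 0 = 0 by apply: max_r; rewrite subr_le0.
  rewrite h0 -g1 addrK; apply: gA; apply/andP; split; lra.
have -> : Num.max (2 * t - 1) 0 = 2 * t - 1 by apply: max_l; rewrite subr_ge0 ltW.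
rewrite [g 1 + _]addrC addrK; apply: hA.
apply/andP; split; lra.
Qed.

Lemma Conn_seg (A : set E) p q :
  (forall l : R, 0 <= l <= 1 -> A (p + l *: (q - p))) -> Conn A p q.
Proof.
move=> H; exists (fun t => p + t *: (q - p)); split.
  move=> t; apply: cvgD; first exact: cvg_cst.
  by apply: cvgZ; [exact: cvg_id|exact: cvg_cst].
rewrite scale0r addr0 scale1r addrC subrK; do 2 split => //.
Qed.

Lemma Conn_of_cpath (A : set E) p q g : cpath p q g ->
  (forall t, 0 <= t <= 1 -> A (g t)) -> Conn A p q.
Proof.
move=> [gc [g0 g1]] gA; exists (g \o clamp); split; first exact: clamp_comp_cont.
rewrite /= !clamp_id ?ler01 ?lexx //; do 2 split => //.
by move=> t _; apply: gA; apply: clamp_in.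
Qed.

Lemma pc_of_Conn (A : set E) : (forall p q, A p -> A q -> Conn A p q) ->
  path_connected A.
Proof.
move=> H p q Ap Aq; have [g [gc [g0 [g1 gA]]]] := H p q Ap Aq.
exists g; split => //; split => //; exact: continuous_subspaceT.
Qed.
Lemma line_diff (x v : E) (t : R) :
  is_diff t (fun s : R => x + s *: v) ( *:%R^~ v).
Proof.
have -> : (fun s : R => x + s *: v) = cst x + ( *:%R^~ v) by [].
rewrite -[X in is_diff _ _ X](add0r ( *:%R^~ v)).
apply: is_diffD.
Qed.

Section Vsec.
Variable V : E -> R.
Hypothesis hV : forall y, differentiable V y.

Lemma line_deriv (x v : E) (t : R) :
  is_derive t 1 (fun s : R => V (x + s *: v)) ('D_v V (x + t *: v)).
Proof.
have dl := @line_diff x v t.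
have dc : differentiable (V \o (fun s : R => x + s *: v)) t.
  apply: differentiable_comp => //.
have h : is_derive t 1 (V \o (fun s : R => x + s *: v)) ('D_1 (V \o (fun s : R => x + s *: v)) t).
  by apply/derivableP; apply/derivable1_diffP.
apply: (is_derive_eq h).
rewrite deriveE // diff_comp //= diff_val scale1r deriveE //.
Qed.

Lemma mvt_dir (x v : E) : exists th : R, 0 <= th <= 1 /\
  V (x + v) - V x = 'D_v V (x + th *: v).
Proof.
have := @MVT_segment R (fun s => V (x + s *: v)) (fun s => 'D_v V (x + s *: v)) 0 1 ler01.
case.
- by move=> s _; apply: line_deriv.
- apply: continuous_subspaceT => s.
  apply: differentiable_continuous; apply/derivable1_diffP.
  exact: (@ex_derive _ _ _ _ _ _ _ (line_deriv x v s)).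
move=> c; rewrite in_itv /= => hc; rewrite scale1r scale0r addr0 subr0 mulr1 => ->.
by exists c.
Qed.


End Vsec.
Lemma D_dot_dummy : True. Proof. by []. Qed.
Section Vsec2.
Variable V : E -> R.
Hypothesis hV : forall y, differentiable V y.
Lemma D_dot (y v : E) : 'D_v V y = dot v (grad V y).
Proof.
rewrite deriveE // {1}(row_sum_delta v) linear_sum /dot.
apply: eq_bigr => i _; rewrite linearZ /= mxE -deriveE //.
Qed.
End Vsec2.

Lemma entry_le (v : E) i : `|v 0 i| <= `|v|.
Proof.
have /mapP[j Hj ->] : `|v 0 i| \in [seq `|v x.1 x.2| | x : 'I_1 * 'I_d].
  by apply/mapP; exists (0, i) => //=; rewrite mem_enum.
by rewrite [leRHS]/Num.norm /= mx_normrE; apply/bigmax_geP; right => /=; exists j.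
Qed.

Lemma dot_err (v a b : E) (e : R) : (forall i, `|a 0 i - b 0 i| <= e) ->
  `|dot v a - dot v b| <= d%:R * `|v| * e.
Proof.
move=> H; rewrite /dot -sumrB.
apply: le_trans (ler_norm_sum _ _ _) _.
rewrite -[d in d%:R]card_ord -sum1_card natr_sum !mulr_suml.
apply: ler_sum => i _; rewrite -mulrBr normrM mul1r.
apply: ler_pM => //; exact: entry_le.
Qed.

Lemma norm_ge_dot (u : E) : `|u| ^+ 2 <= dot u u.
Proof.
have [->|u0] := eqVneq `|u| 0.
  by rewrite expr0n /= /dot sumr_ge0 // => i _; rewrite -expr2 sqr_ge0.
have [[i j] /= Hn] := mx_norm_neq0 u0.
have -> : `|u| = `|u i j| by exact: Hn.
rewrite (ord1 i) /dot (bigD1 j) //= -expr2 real_normK ?num_real //.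
by rewrite lerDl sumr_ge0 // => k _; rewrite -expr2 sqr_ge0.
Qed.

Lemma in_eball (z y : E) (rho eta : R) : 0 < rho -> rho * (d%:R + 1) <= eta ->
  `|y - z| < rho -> eball z eta y.
Proof.
move=> r0 re yz; rewrite /eball /=.
apply: (@le_lt_trans _ _ (\sum_(i < d) `|y - z| ^+ 2)).
  apply: ler_sum => i _; rewrite -real_normK ?num_real //.
  by rewrite lerXn2r ?nnegrE // entry_le.
rewrite sumr_const card_ord -mulr_natl.
have n0 : 0 <= `|y - z| by [].
have dn : 0 <= (d%:R : R) by [].
have : `|y - z| ^+ 2 <= rho ^+ 2.
  rewrite !expr2; have := ltW yz; nra.
have : rho ^+ 2 * (d%:R + 1) ^+ 2 <= eta ^+ 2.
  rewrite -exprMn; have h : 0 <= rho * (d%:R + 1) by rewrite mulr_ge0 ?ltW // addr_ge0.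
  rewrite !expr2; nra.
move=> h1 h2.
have h3 : (d%:R : R) * `|y - z| ^+ 2 <= d%:R * rho ^+ 2 by apply: ler_wpM2l.
have h4 : 0 < rho ^+ 2 by rewrite exprn_gt0.
have h5 : (d%:R : R) * rho ^+ 2 < rho ^+ 2 * (d%:R + 1) ^+ 2.
  rewrite mulrC ltr_pM2l //; nra.
lra.
Qed.
Lemma comm_height_eq (V : E -> R) p z : Conn [set y | V y <= V z] p z ->
  comm_height V p z = (V z)%:E.
Proof.
move=> [g [gc [g0 [g1 gA]]]]; apply/eqP; rewrite eq_le; apply/andP; split.
  apply: (@le_trans _ _ (ereal_sup [set (V (g t))%:E | t in `[0, 1]])).
    apply: ereal_inf_lbound; exists g => //; split; first exact: continuous_subspaceT.
    by split.
  apply: ub_ereal_sup => _ [t /= t01 <-]; rewrite lee_fin; apply: gA.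
  by move: t01; rewrite /= in_itv.
apply/ereal_infP => _ [f [fc [f0 f1]] <-].
apply: ereal_sup_ubound; exists 1 => //=; last by rewrite f1.
by rewrite in_itv /= ler01 lexx.
Qed.
End W.

Unset Implicit Arguments.
Set Strict Implicit.

Section L.
Variables (R : realType) (d : nat).
Notation E := 'rV[R]_d.

Lemma dotB (a b c : E) : dot (a - b) c = dot a c - dot b c.
Proof. by rewrite /dot -sumrB; apply: eq_bigr => i _; rewrite !mxE mulrBl. Qed.

Lemma dotZ k (a c : E) : dot (k *: a) c = k * dot a c.
Proof. by rewrite /dot mulr_sumr; apply: eq_bigr => i _; rewrite !mxE mulrA. Qed.

Variables (V : E -> R) (z : E).
Hypothesis hV : forall y, differentiable V y.
Hypothesis hD : forall i : 'I_d, continuous (fun x => 'D_(@basis_vec R d i) V x).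
Let u := grad V z.
Hypothesis hu : u != 0.

Let N := `|u|.
Lemma N0 : 0 < N.
Proof. by rewrite normr_gt0. Qed.

Lemma near_grad : exists2 del : R, 0 < del & forall y, `|y - z| < del ->
  forall v, `|dot v (grad V y) - dot v u| <= N / 6 * `|v|.
Proof.
pose eps := N / (6 * (d%:R + 1)).
have eps0 : 0 < eps by rewrite divr_gt0 ?N0 // mulr_gt0 // ltr_wpDl.
have H : \forall y \near z, forall i : 'I_d,
    `|'D_(@basis_vec R d i) V z - 'D_(@basis_vec R d i) V y| < eps.
  apply: (@filter_forall _ _ (fun i y => `|'D_(@basis_vec R d i) V z - 'D_(@basis_vec R d i) V y| < eps) (nbhs z) (nbhs_filter z)) => i.
  have := hD i z; move/cvgrPdist_lt => /(_ eps eps0); exact.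
have [del del0 Hdel] := (nbhs_ballP _ _).1 H.
exists del => // y yz v.
have Hi : forall i, `|grad V y 0 i - u 0 i| <= eps.
  move=> i; rewrite !mxE distrC; apply: ltW; apply: Hdel.
  by rewrite -ball_normE /= distrC.
apply: le_trans (dot_err v Hi) _.
have hd : (d%:R : R) * eps <= N / 6.
  have e : N / 6 = eps * (d%:R + 1).
    rewrite /eps; field; by rewrite gt_eqF // ltr_wpDl.
  rewrite e; lra.
have nv : 0 <= `|v| by [].
nra.
Qed.

Lemma mvt_bound (del : R) (x v : E) :
  (forall y, `|y - z| < del -> forall v, `|dot v (grad V y) - dot v u| <= N / 6 * `|v|) ->
  (forall th : R, 0 <= th <= 1 -> `|x + th *: v - z| < del) ->
  (V (x + v) - V x <= dot v u + N / 6 * `|v|) /\ (dot v u - N / 6 * `|v| <= V (x + v) - V x).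
Proof.
move=> Hg Hx; have [th [th01 ->]] := mvt_dir hV x v.
rewrite D_dot //; have := Hg _ (Hx _ th01) v.
rewrite ler_norml => /andP[h1 h2].
split; lra.
Qed.

Lemma local_star (eta : R) : 0 < eta -> exists rho : R, exists h : E,
  [/\ 0 < rho, rho * (d%:R + 1) <= eta,
   (forall p, `|p - z| < rho -> V p < V z ->
       Conn [set y | `|y - z| < rho /\ V y < V z] p h) &
   Conn [set y | V y <= V z] h z].
Proof.
move=> eta0.
have [del del0 Hg] := near_grad.
have N0' := N0.
have dp : 0 < (d%:R : R) + 1 by rewrite ltr_wpDl.
pose rho := Num.min del (eta / (d%:R + 1)).
have rho0 : 0 < rho by rewrite lt_min del0 divr_gt0.
have rdel : rho <= del by rewrite ge_min lexx.
have reta : rho * (d%:R + 1) <= eta.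
  by rewrite -ler_pdivlMr // ge_min lexx orbT.
pose s := rho / (2 * N).
have s0 : 0 < s by rewrite divr_gt0 // mulr_gt0.
have sN : s * N = rho / 2 by rewrite /s; field; rewrite gt_eqF.
pose h := z - s *: u.
have hz : h - z = (- s) *: u by rewrite /h addrAC subrr add0r scaleNr.
have nhz : `|h - z| = rho / 2 by rewrite hz normrZ normrN gtr0_norm.
have hU := norm_ge_dot u.
have sU : rho * N / 2 <= s * dot u u.
  have : s * N ^+ 2 <= s * dot u u by rewrite ler_pM2l.
  by rewrite expr2 mulrA sN mulrAC.
have dhz : dot (h - z) u = - (s * dot u u) by rewrite hz dotZ mulNr.
have conv : forall p, `|p - z| < rho -> forall l : R, 0 <= l <= 1 ->
    `|p + l *: (h - p) - z| < rho.
  move=> p pz l /andP[l0 l1].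
  have -> : p + l *: (h - p) - z = (1 - l) *: (p - z) + l *: (h - z).
    by apply/rowP => i; rewrite !mxE; ring.
  apply: le_lt_trans (ler_normD _ _) _.
  rewrite !normrZ nhz (ger0_norm l0) ger0_norm ?subr_ge0 //.
  have [->|ln0] := eqVneq l 0; first by rewrite subr0 mul1r mul0r addr0.
  have lp : 0 < l by rewrite lt_def ln0 l0.
  have : (1 - l) * `|p - z| <= (1 - l) * rho.
    by rewrite ler_wpM2l ?subr_ge0 // ltW.
  nra.
exists rho, h; split => //.
- move=> p pz Vp; apply: Conn_seg => l l01.
  split; first exact: conv.
  have P0 : 0 <= `|p - z| by [].
  have X1 : forall th : R, 0 <= th <= 1 -> `|z + th *: (p - z) - z| < del.
    move=> th /andP[t0 t1]; have -> : z + th *: (p - z) - z = th *: (p - z).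
      by rewrite addrAC subrr add0r.
    rewrite normrZ ger0_norm //; apply: lt_le_trans rdel.
    apply: le_lt_trans pz; rewrite -[leRHS]mul1r; exact: ler_wpM2r.
  have [E1 _] := @mvt_bound del _ _ Hg X1.
  have e1 : z + (p - z) = p by rewrite addrC subrK.
  rewrite e1 in E1.
  have X2 : forall th : R, 0 <= th <= 1 -> `|p + th *: (l *: (h - p)) - z| < del.
    move=> th /andP[t0 t1]; rewrite scalerA; apply: lt_le_trans rdel; apply: conv => //.
    case/andP: l01 => l0 l1; apply/andP; split; first exact: mulr_ge0.
    by rewrite -[1]mul1r; apply: ler_pM.
  have [E2 _] := @mvt_bound del _ _ Hg X2.
  case/andP: l01 => l0 l1.
  have ehp : h - p = (h - z) - (p - z) by apply/rowP => i; rewrite !mxE; ring.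
  have dw : dot (l *: (h - p)) u = l * (- (s * dot u u) - dot (p - z) u).
    by rewrite dotZ ehp dotB dhz.
  have Q : `|h - p| <= rho / 2 + `|p - z|.
    have -> : h - p = (h - z) + (z - p) by apply/rowP => i; rewrite !mxE; ring.
    by apply: le_trans (ler_normD _ _) _; rewrite nhz distrC.
  have nw : `|l *: (h - p)| = l * `|h - p| by rewrite normrZ ger0_norm.
  rewrite dw nw in E2.
  set A := dot (p - z) u in E1 E2 dw.
  set U := dot u u in sU E2 dw.
  have f1 : N / 6 * `|h - p| <= N / 6 * (rho / 2 + `|p - z|).
    by rewrite ler_wpM2l // divr_ge0 // ltW.
  have f2 : N / 6 * `|p - z| <= N / 6 * rho.
    by rewrite ler_wpM2l ?divr_ge0 // ?ltW.
  have K : - (s * U) - A + N / 6 * `|h - p| <= - (V p - V z) - N * rho / 12.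
    lra.
  have K' : l * (- (s * U) - A + N / 6 * `|h - p|) <= l * (- (V p - V z) - N * rho / 12).
    exact: ler_wpM2l.
  have [l00|lpos] := eqVneq l 0.
    move: E2; rewrite l00 !mul0r scale0r addr0 => _; exact: Vp.
  have lp : 0 < l by rewrite lt_def lpos l0.
  have : 0 < l * (N * rho / 12) by rewrite mulr_gt0 // divr_gt0 // mulr_gt0.
  have : 0 <= (1 - l) * (V z - V p) by rewrite mulr_ge0 // subr_ge0 // ltW.
  nra.
- apply: Conn_seg => l /andP[l0 l1] /=.
  have ew : h + l *: (z - h) = z + (1 - l) *: (h - z) by apply/rowP => i; rewrite !mxE; ring.
  rewrite ew.
  have nw : `|(1 - l) *: (h - z)| = (1 - l) * (rho / 2).
    by rewrite normrZ nhz ger0_norm // subr_ge0.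
  have X3 : forall th : R, 0 <= th <= 1 -> `|z + th *: ((1 - l) *: (h - z)) - z| < del.
    move=> th /andP[t0 t1]; rewrite addrAC subrr add0r normrZ nw ger0_norm //.
    apply: lt_le_trans rdel.
    have : 0 <= 1 - l by rewrite subr_ge0.
    have : th * (1 - l) <= 1 by nra.
    nra.
  have [E3 _] := @mvt_bound del _ _ Hg X3.
  rewrite dotZ dhz nw in E3.
  have : 0 <= 1 - l by rewrite subr_ge0.
  set U := dot u u in sU E3.
  move=> l1'.
  have g1 : 0 <= (1 - l) * (s * U - rho * N / 2) by rewrite mulr_ge0 // subr_ge0.
  have g2 : 0 <= (1 - l) * (rho * N) by rewrite mulr_ge0 // mulr_ge0 // ltW.
  lra.
Qed.
End L.
Section H.
Variables (R : realType) (d : nat).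
Notation E := 'rV[R]_d.

Lemma near_ball (g : R -> E) (t1 : R) (e : R) : continuous g -> 0 < e ->
  exists2 r : R, 0 < r & forall t, `|t - t1| < r -> `|g t - g t1| < e.
Proof.
move=> gc e0; have := gc t1; move/cvgrPdist_lt => /(_ e e0) H.
have [r r0 Hr] := (nbhs_ballP _ _).1 H.
exists r => // t tt1; rewrite distrC; apply: Hr.
by rewrite -ball_normE /= distrC.
Qed.

Lemma first_hit (A : set E) (g : R -> E) (z : E) (rho : R) :
  continuous g -> 0 < rho -> g 0 != z ->
  (forall t, 0 <= t <= 1 -> g t != z -> A (g t)) ->
  (exists t0, 0 <= t0 <= 1 /\ g t0 = z) ->
  exists p, Conn A (g 0) p /\ `|p - z| < rho.
Proof.
move=> gc rho0 g0z gA [t0 [t01 gt0]].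
pose S := [set t : R | 0 <= t <= 1 /\ g t = z].
have S0 : S !=set0 by exists t0.
have Slb : has_lbound S by exists 0 => t [/andP[]].
have St0 : inf S <= t0 by apply: ge_inf.
have inf0 : 0 <= inf S by apply: lb_le_inf => // t [/andP[]].
have gi : g (inf S) = z.
  apply/eqP; apply/negP => /negP ne.
  have e0 : 0 < `|g (inf S) - z| by rewrite normr_gt0 subr_eq0.
  have [r r0 Hr] := @near_ball g (inf S) _ gc e0.
  have [t [t01' gtz] tlt] := inf_adherent r0 (conj S0 Slb).
  have tge : inf S <= t by apply: ge_inf.
  have : `|t - inf S| < r by rewrite ger0_norm ?subr_ge0 //; lra.
  move/Hr; rewrite gtz distrC; lra.
have ipos : 0 < inf S.
  rewrite lt_def inf0 andbT; apply/eqP => i0.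
  by move: g0z; rewrite -i0 gi eqxx.
have [r r0 Hr] := @near_ball g (inf S) _ gc rho0.
pose m := Num.min r (inf S).
have m0 : 0 < m by rewrite lt_min r0 ipos.
pose t2 := inf S - m / 2.
have mi : m <= inf S by rewrite ge_min lexx orbT.
have mr : m <= r by rewrite ge_min lexx.
have t20 : 0 <= t2 by rewrite /t2; lra.
have t2i : t2 < inf S by rewrite /t2; lra.
exists (g t2); split; last first.
  rewrite -gi; apply: Hr; rewrite /t2 (_ : inf S - m / 2 - inf S = - (m / 2)); last by ring.
  rewrite normrN ger0_norm; lra.
exists (fun s => g (s * t2)); split.
  move=> s; apply: continuous_comp; last exact: gc.
  by apply: cvgM; [exact: cvg_id|exact: cvg_cst].
rewrite mul0r mul1r; do 2 split => //.
move=> s /andP[s0 s1].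
have st0 : 0 <= s * t2 by rewrite mulr_ge0.
have st1 : s * t2 <= t2 by rewrite -[leRHS]mul1r ler_wpM2r.
apply: gA.
  rewrite st0 /=; apply: (le_trans st1); apply: (le_trans (ltW t2i)).
  by apply: le_trans St0 _; case/andP: t01.
apply/eqP => hz.
have : inf S <= s * t2 by apply: ge_inf => //; split => //; rewrite st0 /=; lra.
lra.
Qed.
End H.


Lemma Conn_end {R : realType} {d : nat} {A : set 'rV[R]_d} {x y} : Conn A x y -> A y.
Proof. by move=> [g [_ [_ [<- gA]]]]; apply: gA; rewrite ler01 lexx. Qed.

Theorem proposition2p5 (R : realType) (d : nat) (V : 'rV[R]_d -> R) (z : 'rV[R]_d)
  (Vcont : continuous V)
  (Vbdd : exists m : R, forall x, m <= V x)
  (VC1 : C1 V)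
  (hz : is_saddle V z) :
  grad V z = 0.
Proof.
case: VC1 => hV hD.
have [->|hu] := eqVneq (grad V z) 0; first done.
exfalso.
case: hz => eta [eta0 [nonemp [notpc pc]]].
apply: notpc.
have [rho [h [rho0 reta Hstar Hhz]]] := @local_star R d V z hV hD hu eta eta0.
set O := open_valley V z.
have LA : forall y, `|y - z| < rho -> V y < V z -> (O `&` eball z eta) y.
  move=> y yz Vy; split; last exact: in_eball rho0 reta yz.
  split => //; rewrite /closed_valley /=; apply: comm_height_eq.
  apply: Conn_trans Hhz; apply: Conn_mono (Hstar y yz Vy).
  by move=> w [_ /ltW].
apply: pc_of_Conn => a b Aa Ab.
have [g [gc [ga [gb gB]]]] : Conn ((O `|` [set z]) `&` eball z eta) a b.
  have Ba : ((O `|` [set z]) `&` eball z eta) a by case: Aa => Oa Ba0; split => //; left.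
  have Bb : ((O `|` [set z]) `&` eball z eta) b by case: Ab => Oa Ba0; split => //; left.
  have [gam [cp gamB]] := pc a b Ba Bb.
  exact: Conn_of_cpath cp gamB.
have nz : forall y, (O `&` eball z eta) y -> y != z.
  move=> y [[_ Vy] _]; apply/eqP => yz; move: Vy; rewrite yz ltxx.
  done.
have gA : forall t, 0 <= t <= 1 -> g t != z -> (O `&` eball z eta) (g t).
  move=> t t01 ne; case: (gB t t01) => [[Ot|zt] Bt]; split => //.
  by move: ne; rewrite zt eqxx.
case: (pselect (exists t0, 0 <= t0 <= 1 /\ g t0 = z)) => [hit|nohit]; last first.
  exists g; do 3 split => //; move=> t t01; apply: gA => //.
  by apply/eqP => gz; apply: nohit; exists t.
have [p [Cap pz]] := @first_hit R d _ g z rho gc rho0 (ltac:(by rewrite ga; apply: nz)) gA hit.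
pose g' := fun t => g (1 - t).
have g'c : continuous g'.
  move=> t; apply: continuous_comp; last exact: gc.
  by apply: cvgB; [exact: cvg_cst|exact: cvg_id].
have gA' : forall t, 0 <= t <= 1 -> g' t != z -> (O `&` eball z eta) (g' t).
  move=> t /andP[t0 t1] ne; apply: gA => //; apply/andP; split; lra.
have hit' : exists t0, 0 <= t0 <= 1 /\ g' t0 = z.
  case: hit => t0 [/andP[a0 a1] gt0]; exists (1 - t0); split.
    apply/andP; split; lra.
  by rewrite /g' opprB addrC subrK.
have g'0 : g' 0 = b by rewrite /g' subr0.
have [q [Cbq qz]] := @first_hit R d _ g' z rho g'c rho0 (ltac:(by rewrite g'0; apply: nz)) gA' hit'.
rewrite ga in Cap; rewrite g'0 in Cbq.
have [[_ Vp] _] := Conn_end Cap.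
have [[_ Vq] _] := Conn_end Cbq.
have Cpq : Conn (O `&` eball z eta) p q.
  apply: Conn_mono (Conn_trans (Hstar p pz Vp) (Conn_sym (Hstar q qz Vq))).
  by move=> w [wz Vw]; apply: LA.
exact: Conn_trans Cap (Conn_trans Cpq (Conn_sym Cbq)).
Qed.
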